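(* Let $A$ be an AUF algebra. Then: 1. For each primitive idempotent $e\in A$, the quotient map $Ae\to Ae/\mathrm{rad}(Ae)$ is a projective cover of the irreducible coherent left $A$-module $Ae/\mathrm{rad}(Ae)$. 2. Every irreducible quasicoherent left $A$-module is isomorphic to $Ae/\mathrm{rad}(Ae)$ for some primitive idempotent $e\in A$. 3. For primitive idempotents $e,f\in A$, the following are equivalent: (a) $Ae\simeq Af$ as left $A$-modules; (b) $Ae/\mathrm{rad}(Ae)\simeq Af/\mathrm{rad}(Af)$ as left $A$-modules; (c) there is a partial isometry in $A$ from $e$ to $f$.
   Context: All algebras are associative $\mathbb C$-algebras, not necessarily unital. An idempotent is $e$ with $e^2=e$; for idempotents, $f\le e$ means $ef=fe=f$; a nonzero idempotent $e$ is primitive if the only idempotents $f\le e$ are $0$ and $e$. An algebra $A$ is AUF if there is a family $(e_i)_{i\in\mathfrak I}$ of mutually orthogonal idempotents with $\dim e_iAe_j<\infty$ and $A=\sum_{i,j}e_iAe_j$. A left $A$-module $M$ is quasicoherent if $\xi\in A\xi$ for all $\xi\in M$, coherent if moreover finitely generated. Irreducible means nonzero with no nonzero proper submodules. For a primitive idempotent $e$ of an AUF algebra $A$, the module $Ae$ has a unique maximal proper left $A$-submodule, denoted $\mathrm{rad}(Ae)$. A submodule $K\le P$ is superfluous if every submodule $L\le P$ with $K+L=P$ satisfies $L=P$; a projective cover of $N$ is an epimorphism $P\to N$ with $P$ a projective left $A$-module and superfluous kernel. A partial isometry from $e$ to $f$ is a $u\in eAf$ for which there is $v\in fAe$ with $uv=e$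 and $vu=f$. *)

(* Defs.v *)
From HB Require Import structures.
From mathcomp Require Import all_boot all_order all_algebra.
From mathcomp Require Import complex.
From mathcomp Require Import Rstruct.
Set Implicit Arguments. Unset Strict Implicit. Unset Printing Implicit Defensive.
Import GRing.Theory.
Local Open Scope ring_scope.

Notation CC := (complex Rdefinitions.R).

HB.mixin Record Lmodule_isNUAlgebra A of GRing.Lmodule CC A := {
  amul : A -> A -> A;
  amulA : forall x y z, amul x (amul y z) = amul (amul x y) z;
  amulDl : forall x y z, amul (x + y) z = amul x z + amul y z;
  amulDr : forall x y z, amul x (y + z) = amul x y + amul x z;
  amulZl : forall (k : CC) x y, amul (k *: x) y = k *: amul x y;
  amulZr : forall (k : CC) x y, amul x (k *: y) = k *: amul x y
}.
#[short(type="nualgType")]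
HB.structure Definition NUAlgebra := {A of Lmodule_isNUAlgebra A & GRing.Lmodule CC A}.

HB.mixin Record Lmodule_isNUModule (A : nualgType) M of GRing.Lmodule CC M := {
  act : A -> M -> M;
  actA : forall a b m, act (amul a b) m = act a (act b m);
  actDl : forall a b m, act (a + b) m = act a m + act b m;
  actDr : forall a m n, act a (m + n) = act a m + act a n;
  actZl : forall (k : CC) a m, act (k *: a) m = k *: act a m;
  actZr : forall (k : CC) a m, act a (k *: m) = k *: act a m
}.
#[short(type="numodType")]
HB.structure Definition NUModule (A : nualgType) :=
  {M of Lmodule_isNUModule A M & GRing.Lmodule CC M}.

Section AlgebraNotions.
Variable A : nualgType.

Definition idempotent (e : A) := amul e e = e.

Definition idem_le (f e : A) := amul e f = f /\ amul f e = f.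

Definition primitive (e : A) :=
  [/\ idempotent e, e <> 0 &
      forall f, idempotent f -> idem_le f e -> f = 0 \/ f = e].

Definition fin_dim (P : A -> Prop) :=
  exists s : seq A, forall x, P x ->
    exists c : 'I_(size s) -> CC, x = \sum_(i < size s) c i *: s`_i.

Definition corner (e f : A) : A -> Prop := fun x => exists a, x = amul (amul e a) f.

Definition AUF :=
  exists (I : Type) (E : I -> A),
    [/\ forall i, idempotent (E i),
        forall i j, i <> j -> amul (E i) (E j) = 0,
        forall i j, fin_dim (corner (E i) (E j)) &
        forall a : A, exists s : seq ((I * I) * A),
          (forall p, List.In p s -> corner (E p.1.1) (E p.1.2) p.2) /\
          a = \sum_(p <- s) p.2].

Definition partial_isometry (u e f : A) :=
  corner e f u /\
  exists v, corner f e v /\ amul u v = e /\ amul v u = f.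

End AlgebraNotions.

Section ModuleNotions.
Variable A : nualgType.

Definition submodule (M : numodType A) (S : M -> Prop) :=
  [/\ S 0, forall x y, S x -> S y -> S (x + y),
      forall (k : CC) x, S x -> S (k *: x) &
      forall (a : A) x, S x -> S (act a x)].

Definition proper (M : numodType A) (S : M -> Prop) := exists x, ~ S x.

Definition quasicoherent (M : numodType A) := forall x : M, exists a : A, act a x = x.

Definition generated (M : numodType A) (s : seq M) : M -> Prop :=
  fun x => forall S, submodule S -> (forall y, List.In y s -> S y) -> S x.

Definition fin_generated (M : numodType A) :=
  exists s : seq M, forall x, generated s x.

Definition coherent (M : numodType A) := quasicoherent M /\ fin_generated M.

Definition irreducible (M : numodType A) :=
  (exists x : M, x <> 0) /\
  forall S : M -> Prop, submodule S -> (forall x, S x -> x = 0) \/ (forall x, S x).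

Definition is_hom (M N : numodType A) (f : M -> N) :=
  (forall (k : CC) x y, f (k *: x + y) = k *: f x + f y) /\
  (forall (a : A) x, f (act a x) = act a (f x)).

Definition isomorphic (M N : numodType A) :=
  exists f : M -> N, is_hom f /\ bijective f.

Definition projective (P : numodType A) :=
  forall (M N : numodType A) (g : M -> N) (h : P -> N),
    is_hom g -> (forall y, exists x, g x = y) -> is_hom h ->
    exists k : P -> M, is_hom k /\ forall x, g (k x) = h x.

Definition superfluous (P : numodType A) (K : P -> Prop) :=
  forall L : P -> Prop, submodule L ->
    (forall x, exists k l, K k /\ L l /\ x = k + l) -> forall x, L x.

Definition kernel (M N : numodType A) (f : M -> N) : M -> Prop := fun x => f x = 0.

Definition projective_cover (P N : numodType A) (p : P -> N) :=
  [/\ projective P, is_hom p, (forall y, exists x, p x = y) & superfluous (kernel p)].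

Definition maximal_proper (M : numodType A) (S : M -> Prop) :=
  [/\ submodule S, proper S &
      forall T, submodule T -> proper T -> (forall x, S x -> T x) -> forall x, T x -> S x].

(* radical: intersection of the maximal proper submodules (for Ae with e
   primitive this is its unique maximal proper submodule rad(Ae)) *)
Definition mrad (M : numodType A) : M -> Prop :=
  fun x => forall S, maximal_proper S -> S x.

(* p : M -> N is (up to isomorphism) the quotient map M -> M / K *)
Definition quotient_map (M N : numodType A) (K : M -> Prop) (p : M -> N) :=
  [/\ is_hom p, (forall y, exists x, p x = y) & forall x, p x = 0 <-> K x].

End ModuleNotions.

Section LeftIdeal.
Variables (A : nualgType) (e : A).

(* for e idempotent, A e = { x | x e = x } *)
Definition Ae_pred : {pred A} := fun x => amul x e == x.

Lemma amul0l (x : A) : amul 0 x = 0.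
Proof. by rewrite -[X in amul X _](scale0r 0) amulZl scale0r. Qed.

Fact Ae_closed : GRing.subsemimod_closed Ae_pred.
Proof.
split; [split|].
- by rewrite unfold_in /= amul0l.
- by move=> x y; rewrite !unfold_in /= amulDl => /eqP -> /eqP ->.
- by move=> k x; rewrite !unfold_in /= amulZl => /eqP ->.
Qed.
HB.instance Definition _ := GRing.isSubmodClosed.Build CC A Ae_pred Ae_closed.

Inductive AeT : predArgType := MkAe (x : A) of x \in Ae_pred.
Definition Ae_val (u : AeT) := let: MkAe x _ := u in x.
HB.instance Definition _ := [isSub of AeT for Ae_val].
HB.instance Definition _ := [Choice of AeT by <:].
HB.instance Definition _ := [SubChoice_isSubZmodule of AeT by <:].
HB.instance Definition _ := [SubZmodule_isSubLmodule of AeT by <:].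

Fact Ae_act_in (a : A) (u : AeT) : amul a (Ae_val u) \in Ae_pred.
Proof.
case: u => x /= Hx; rewrite unfold_in /= -amulA.
by move: Hx; rewrite unfold_in /= => /eqP ->.
Qed.
Definition Ae_act (a : A) (u : AeT) : AeT := MkAe (Ae_act_in a u).

Fact Ae_actA a b u : Ae_act (amul a b) u = Ae_act a (Ae_act b u).
Proof. by apply: val_inj; rewrite /= amulA. Qed.
Fact Ae_actDl a b u : Ae_act (a + b) u = Ae_act a u + Ae_act b u.
Proof. by apply: val_inj; rewrite /= amulDl. Qed.
Fact Ae_actDr a u v : Ae_act a (u + v) = Ae_act a u + Ae_act a v.
Proof. by apply: val_inj; rewrite /= amulDr. Qed.
Fact Ae_actZl (k : CC) a u : Ae_act (k *: a) u = k *: Ae_act a u.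
Proof. by apply: val_inj; rewrite /= amulZl. Qed.
Fact Ae_actZr (k : CC) a u : Ae_act a (k *: u) = k *: Ae_act a u.
Proof. by apply: val_inj; rewrite /= amulZr. Qed.

HB.instance Definition _ := Lmodule_isNUModule.Build A AeT
  Ae_actA Ae_actDl Ae_actDr Ae_actZl Ae_actZr.

End LeftIdeal.

Arguments mrad {A} M _.

(* Main.v *)
Require Import Defs.
From Stdlib Require Import Classical ClassicalEpsilon FunctionalExtensionality PropExtensionality.
From HB Require Import structures.
From mathcomp Require Import all_boot all_order all_algebra.
From mathcomp Require Import complex Rstruct.
Set Implicit Arguments. Unset Strict Implicit. Unset Printing Implicit Defensive.
Import GRing.Theory.
Local Open Scope ring_scope.

Section Basic.
Variable A : nualgType.
Implicit Types x y z : A.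

Lemma amul0r x : amul x 0 = 0.
Proof. by rewrite -[X in amul _ X](scale0r 0) amulZr scale0r. Qed.
Lemma amulNl x y : amul (- x) y = - amul x y.
Proof. by rewrite -scaleN1r amulZl scaleN1r. Qed.
Lemma amulNr x y : amul x (- y) = - amul x y.
Proof. by rewrite -scaleN1r amulZr scaleN1r. Qed.
Lemma amulBl x y z : amul (x - y) z = amul x z - amul y z.
Proof. by rewrite amulDl amulNl. Qed.
Lemma amulBr x y z : amul x (y - z) = amul x y - amul x z.
Proof. by rewrite amulDr amulNr. Qed.
Lemma amul_suml I (r : seq I) (P : pred I) (F : I -> A) x :
  amul (\sum_(i <- r | P i) F i) x = \sum_(i <- r | P i) amul (F i) x.
Proof.
by elim/big_rec2: _ => [|i y1 y2 _ <-]; rewrite ?amul0l ?amulDl.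
Qed.
Lemma amul_sumr I (r : seq I) (P : pred I) (F : I -> A) x :
  amul x (\sum_(i <- r | P i) F i) = \sum_(i <- r | P i) amul x (F i).
Proof.
by elim/big_rec2: _ => [|i y1 y2 _ <-]; rewrite ?amul0r ?amulDr.
Qed.

Fixpoint pw (e x : A) (n : nat) : A := if n is n'.+1 then amul x (pw e x n') else e.

Definition inC (e x : A) := amul e x = x /\ amul x e = x.
Definition nilpt (e x : A) := exists n, pw e x n = 0.

Variable e : A.
Hypothesis He : Defs.idempotent e.

Lemma inE_e : inC e e. Proof. by split. Qed.

Lemma pw_in x n : inC e x -> inC e (pw e x n).
Proof.
move=> [H1 H2]; elim: n => [|n [IH1 IH2]] /=; first exact: inE_e.
by split; rewrite ?amulA ?H1 // -amulA IH2.
Qed.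

Lemma pw_r x n : inC e x -> pw e x n.+1 = amul (pw e x n) x.
Proof.
move=> [H1 H2]; elim: n => [|n IH] /=; first by rewrite H1 H2.
by rewrite -amulA -IH.
Qed.

Lemma pw_add x a b : inC e x -> amul (pw e x a) (pw e x b) = pw e x (a + b).
Proof.
move=> Hx; elim: a => [|a IH] /=; first by case: (pw_in b Hx).
by rewrite -amulA IH.
Qed.

Lemma comm_pw x y n : inC e x -> amul x y = amul y x ->
  amul x (pw e y n) = amul (pw e y n) x.
Proof.
move=> [H1 H2] Hc; elim: n => [|n IH] /=; first by rewrite H1 H2.
by rewrite amulA Hc -amulA IH amulA.
Qed.

Lemma comm_pw2 x y a b : inC e x -> inC e y -> amul x y = amul y x ->
  amul (pw e x a) (pw e y b) = amul (pw e y b) (pw e x a).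
Proof.
move=> Hx Hy Hc; apply: comm_pw; first exact: pw_in.
by rewrite (comm_pw a Hy) //.
Qed.

Lemma pw_mulC x y n : inC e x -> inC e y -> amul x y = amul y x ->
  pw e (amul x y) n = amul (pw e x n) (pw e y n).
Proof.
move=> Hx Hy Hc; elim: n => [|n IH] /=; first by rewrite He.
rewrite IH -!amulA; congr amul.
by rewrite !amulA (comm_pw n Hy).
Qed.

Lemma pw_e n : pw e e n = e.
Proof. by elim: n => [|n IH] //=; rewrite IH He. Qed.

Lemma inE_mul x y : inC e x -> inC e y -> inC e (amul x y).
Proof. by move=> [H1 H2] [H3 H4]; split; rewrite ?amulA ?H1 // -amulA H4. Qed.
Lemma inE_add x y : inC e x -> inC e y -> inC e (x + y).
Proof. by move=> [H1 H2] [H3 H4]; split; rewrite ?amulDl ?amulDr ?H1 ?H2 ?H3 ?H4. Qed.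
Lemma inE_scale k x : inC e x -> inC e (k *: x).
Proof. by move=> [H1 H2]; split; rewrite ?amulZl ?amulZr ?H1 ?H2. Qed.
Lemma inE_opp x : inC e x -> inC e (- x).
Proof. by move=> Hx; rewrite -scaleN1r; apply: inE_scale. Qed.
Lemma inE_0 : inC e 0.
Proof. by split; rewrite ?amul0l ?amul0r. Qed.
Lemma inE_sum I (r : seq I) (F : I -> A) : (forall i, inC e (F i)) -> inC e (\sum_(i <- r) F i).
Proof. by move=> H; elim/big_rec: _ => [|i y _ Hy]; [exact: inE_0 | exact: inE_add]. Qed.
Lemma inE_eae a : inC e (amul (amul e a) e).
Proof. by split; rewrite ?amulA ?He // -amulA He. Qed.

Lemma pw_scale k x n : inC e x -> pw e (k *: x) n = k ^+ n *: pw e x n.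
Proof.
move=> Hx; elim: n => [|n IH] /=; first by rewrite scale1r.
by rewrite IH amulZl amulZr scalerA exprS.
Qed.

Lemma nilp_scale k x : inC e x -> nilpt e x -> nilpt e (k *: x).
Proof. by move=> Hx [n Hn]; exists n; rewrite pw_scale // Hn scaler0. Qed.

Lemma linv_not_nilpt g x : e <> 0 -> inC e x -> amul g x = e -> ~ nilpt e x.
Proof.
move=> e0 Hx Hg [n]; elim: n => [|n IH] //= Hn; apply: IH.
have -> : pw e x n = amul g (amul x (pw e x n)) by rewrite amulA Hg; case: (pw_in n Hx).
by rewrite Hn amul0r.
Qed.

Lemma geom n : inC e n -> nilpt e n -> exists g, amul g (e - n) = e.
Proof.
move=> Hn [M HM]; exists (\sum_(0 <= i < M) pw e n i).
rewrite amulBr amul_suml amul_suml.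
have -> : \sum_(0 <= i < M) amul (pw e n i) e = \sum_(0 <= i < M) pw e n i.
  by apply: eq_bigr => i _; case: (pw_in i Hn).
have -> : \sum_(0 <= i < M) amul (pw e n i) n = \sum_(0 <= i < M) pw e n i.+1.
  by apply: eq_bigr => i _; rewrite pw_r.
rewrite -sumrB (eq_bigr (fun i => - (pw e n i.+1 - pw e n i))); last by move=> i _; rewrite opprB.
by rewrite sumrN telescope_sumr // HM sub0r opprK.
Qed.

End Basic.


Section Span.
Variable A : nualgType.

Definition inspan (s : seq A) (x : A) :=
  exists c : nat -> CC, x = \sum_(i < size s) c i *: s`_i.

Lemma lin_dep (s : seq A) m (x : 'I_m -> A) : (size s < m)%N ->
  (forall i, inspan s (x i)) ->
  exists c : 'I_m -> CC, (exists i, c i <> 0) /\ \sum_i c i *: x i = 0.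
Proof.
move=> Hm H.
pose cf i := proj1_sig (constructive_indefinite_description _ (H i)).
have cfP i : x i = \sum_(j < size s) cf i j *: s`_j.
  exact: (proj2_sig (constructive_indefinite_description _ (H i))).
pose C : 'M[CC]_(m, size s) := \matrix_(i, j) cf i j.
have Kn0 : kermx C != 0.
  rewrite -mxrank_eq0 mxrank_ker subn_eq0 -ltnNge.
  by apply: (leq_ltn_trans _ Hm); apply: rank_leq_col.
have [i [j Hij]] : exists i j, kermx C i j <> 0.
  apply: NNPP => Hn; move/eqP: Kn0; apply; apply/matrixP => a b.
  have -> : (0 : 'M[CC]_m) a b = 0 by rewrite mxE.
  by apply: NNPP => Hab; apply: Hn; exists a, b.
pose w := row i (kermx C).
have Hw : w *m C = 0 by rewrite /w -row_mul mulmx_ker row0.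
exists (fun k => w ord0 k); split; first by exists j; rewrite mxE.
under eq_bigr => k _ do rewrite cfP scaler_sumr.
rewrite exchange_big /= big1 // => b _.
under eq_bigr => k _ do rewrite scalerA.
rewrite -scaler_suml.
have := congr1 (fun M : 'M[CC]_(1, size s) => M ord0 b) Hw; rewrite !mxE => E.
suff -> : \sum_(k < m) w ord0 k * cf k b = 0 by rewrite scale0r.
by rewrite -[RHS]E; apply: eq_bigr => k _; rewrite [C _ _]mxE.
Qed.


Lemma inspan0 s : inspan s 0.
Proof. by exists (fun _ => 0); rewrite big1 // => i _; rewrite scale0r. Qed.

Lemma inspanD s x y : inspan s x -> inspan s y -> inspan s (x + y).
Proof.
move=> [c1 ->] [c2 ->]; exists (fun i => c1 i + c2 i).
by rewrite -big_split; apply: eq_bigr => i _; rewrite scalerDl.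
Qed.

Lemma inspanZ s k x : inspan s x -> inspan s (k *: x).
Proof.
move=> [c ->]; exists (fun i => k * c i).
by rewrite scaler_sumr; apply: eq_bigr => i _; rewrite scalerA.
Qed.

Lemma inspan_catl s t x : inspan s x -> inspan (s ++ t) x.
Proof.
move=> [c ->]; exists (fun i => if (i < size s)%N then c i else 0).
rewrite size_cat big_split_ord /= [X in _ = _ + X]big1 ?addr0.
  by apply: eq_bigr => i _; rewrite /= ltn_ord nth_cat ltn_ord.
by move=> i _; rewrite /= ltnNge leq_addr /= scale0r.
Qed.

Lemma inspan_catr s t x : inspan t x -> inspan (s ++ t) x.
Proof.
move=> [c ->]; exists (fun i => if (i < size s)%N then 0 else c (i - size s)%N).
rewrite size_cat big_split_ord /= [X in _ = X + _]big1 ?add0r.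
  by apply: eq_bigr => i _; rewrite /= ltnNge leq_addr /= nth_cat ltnNge leq_addr /= addKn.
by move=> i _; rewrite /= ltn_ord scale0r.
Qed.

Lemma fin_dim_inspan (P : A -> Prop) : fin_dim P -> exists s, forall x, P x -> inspan s x.
Proof.
move=> [s Hs]; exists s => x /Hs [c ->].
exists (fun i => if insub i is Some j then c j else 0).
by apply: eq_bigr => i _; rewrite valK.
Qed.

Lemma dichot (e z : A) : primitive e ->
  (exists sp, forall a, inspan sp (amul (amul e a) e)) -> inC e z ->
  nilpt e z \/ exists g, amul g z = e.
Proof.
move=> [He e0 Hprim] [sp Hsp] Hz.
pose m := (size sp).+1.
have [c [[j0 Hj0] Hc]] := @lin_dep sp m (fun i => pw e z i) (ltnSn _)
  (fun i => eq_ind _ (fun y => inspan sp y) (Hsp (pw e z i)) _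
     (let: conj H1 H2 := pw_in He i Hz in etrans (congr1 (amul ^~ e) H1) H2)).
pose cn i := if (i < m)%N then c (inord i) else 0.
have Hsum : \sum_(0 <= i < m) cn i *: pw e z i = 0.
  rewrite big_mkord -[RHS]Hc; apply: eq_bigr => i _.
  by rewrite /cn ltn_ord inord_val.
have : exists i, cn i != 0.
  by exists j0; rewrite /cn ltn_ord inord_val; apply/eqP.
case/ex_minnP=> k Hk Hmin.
have km : (k < m)%N.
  by rewrite ltnNge; apply/negP => Hkm; move: Hk; rewrite /cn ltnNge Hkm eqxx.
move: Hsum; rewrite (@big_cat_nat _ _ _ k 0 m _ _ (leq0n k) (ltnW km)) /= big_nat_cond big1; last first.
  move=> i /andP [/andP [_ Hik] _].
  have -> : cn i = 0 by apply/eqP; apply: contraLR Hik; rewrite -leqNgt => H; apply: Hmin.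
  by rewrite scale0r.
rewrite add0r big_ltn //= => Hsum.
pose r := \sum_(k.+1 <= i < m) (- cn i / cn k) *: pw e z (i - k.+1).
have Hr : inC e r.
  by apply: inE_sum => i; apply: inE_scale; exact: (pw_in He).
have rz : amul z r = amul r z.
  rewrite /r amul_sumr amul_suml; apply: eq_bigr => i _.
  by rewrite amulZr amulZl (comm_pw _ Hz (erefl _)).
have Hk1 : pw e z k = amul (pw e z k.+1) r.
  rewrite /r amul_sumr.
  rewrite (eq_big_nat _ _ (F2 := fun i => (- (cn k)^-1) *: (cn i *: pw e z i))); last first.
    move=> i /andP [Hi _]; rewrite amulZr (pw_add He) // subnKC // scalerA; congr (_ *: _).
    by rewrite !mulNr mulrC.
  rewrite -scaler_sumr.
  have -> : \sum_(k.+1 <= i < m) cn i *: pw e z i = - (cn k *: pw e z k).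
    by apply/eqP; rewrite -addr_eq0 addrC Hsum.
  by rewrite scalerN scaleNr opprK scalerA mulVf ?scale1r.
have Hk2 : pw e z k = amul (pw e z k) (amul r z).
  by rewrite -rz amulA -pw_r.
case: (posnP k) => [k0|kpos].
  right; exists r; move: Hk2; rewrite k0 /=.
  by case: (inE_mul Hr Hz) => -> _ ->.
pose t := amul r z.
have Ht : inC e t by apply: inE_mul.
have H1 j : amul (pw e z k) (pw e t j) = pw e z k.
  elim: j => [|j IH] /=; first by case: (pw_in He k Hz).
  by rewrite amulA -Hk2.
have H2 : pw e t k = amul (pw e r k) (pw e z k).
  by apply: (pw_mulC He).
have Hid : Defs.idempotent (pw e t k).
  by rewrite /Defs.idempotent {1}H2 -amulA H1 -H2.
have [Hle1 Hle2] := pw_in He k Ht.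
case: (Hprim _ Hid (conj Hle1 Hle2)) => Heps.
  by left; exists k; rewrite -(H1 k) Heps amul0r.
right; exists (amul (pw e r k) (pw e z k.-1)).
by rewrite -amulA -pw_r // prednK // -H2.
Qed.

End Span.


Section AUFc.
Variable A : nualgType.

Lemma corner_mul (u v u' w y z a : A) : corner u v y -> corner u' w z ->
  corner u w (amul (amul y a) z).
Proof.
move=> [b ->] [c ->]; exists (amul (amul (amul b v) a) (amul u' c)).
by rewrite !amulA.
Qed.

Lemma corner_l (u v y : A) : Defs.idempotent u -> corner u v y -> amul u y = y.
Proof. by move=> Hu [b ->]; rewrite !amulA Hu. Qed.
Lemma corner_r (u v y : A) : Defs.idempotent v -> corner u v y -> amul y v = y.
Proof. by move=> Hv [b ->]; rewrite -amulA Hv. Qed.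

Lemma sum_fix (a : A) (T : Type) (f : T -> A) (s : seq T) :
  (forall p, List.In p s -> amul a (f p) = f p) ->
  amul a (\sum_(p <- s) f p) = \sum_(p <- s) f p.
Proof.
elim: s => [|p s IH] H; first by rewrite big_nil amul0r.
rewrite !big_cons amulDr H /= ?IH //; first by move=> q Hq; apply: H; right.
by left.
Qed.

Lemma local_unit : AUF A -> forall x : A, exists a, amul a x = x.
Proof.
move=> [I [E [HE1 HE2 HE3 HE4]]] x.
have Ec i j : amul (E i) (E j) = amul (E j) (E i).
  by case: (classic (i = j)) => [->//|Hij]; rewrite !HE2 // => H; apply: Hij.
have [s [Hs ->]] := HE4 x.
suff [a [_ Ha]] : exists a, (forall j, amul a (E j) = amul (E j) a) /\
    forall p, List.In p s -> amul a p.2 = p.2.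
  by exists a; apply: sum_fix.
elim: s Hs => [|p s IH] Hs.
  by exists 0; split => [j|p []]; rewrite ?amul0l ?amul0r.
have [|a [Ha1 Ha2]] := IH; first by move=> q Hq; apply: Hs; right.
pose F := E p.1.1.
exists (a + F - amul a F); split.
  move=> j; rewrite amulBl amulDl amulBr amulDr -!amulA Ec.
  by rewrite !amulA Ha1 -!amulA Ec Ha1 !amulA.
move=> q [<-|Hq].
  have Hp : amul F p.2 = p.2 by apply: (corner_l (HE1 _)); apply: (Hs p); left.
  by rewrite amulBl amulDl -amulA Hp addrAC subrr add0r.
have Hq2 := Ha2 q Hq.
rewrite amulBl amulDl; have -> : amul (amul a F) q.2 = amul F q.2 by rewrite Ha1 -amulA Hq2.
by rewrite Hq2 addrK.
Qed.

Lemma fin_eAe : AUF A -> forall e : A, exists sp, forall a, inspan sp (amul (amul e a) e).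
Proof.
move=> [I [E [HE1 HE2 HE3 HE4]]] e.
have [s [Hs ->]] := HE4 e.
suff [sp Hsp] : exists sp, forall a, inspan sp
   (\sum_(p <- s) \sum_(q <- s) amul (amul p.2 a) q.2).
  exists sp => a; rewrite amul_suml amul_suml.
  suff -> : \sum_(i <- s) amul (amul i.2 a) (\sum_(p <- s) p.2) =
            \sum_(p <- s) \sum_(q <- s) amul (amul p.2 a) q.2 by [].
  by apply: eq_bigr => i _; rewrite amul_sumr.
have inner : forall i j y, corner (E i) (E j) y -> forall t : seq ((I * I) * A),
    (forall q, List.In q t -> corner (E q.1.1) (E q.1.2) q.2) ->
    exists sp, forall a, inspan sp (\sum_(q <- t) amul (amul y a) q.2).
  move=> i j y Hy; elim=> [|q t IH] Ht.
    by exists [::] => a; rewrite big_nil; apply: inspan0.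
  have [|sp2 Hsp2] := IH; first by move=> q' Hq'; apply: Ht; right.
  have [sp1 Hsp1] := fin_dim_inspan (HE3 i q.1.2).
  exists (sp1 ++ sp2) => a; rewrite big_cons; apply: inspanD.
    apply: inspan_catl; apply: Hsp1; apply: corner_mul Hy (Ht q _); by left.
  exact: inspan_catr.
suff gen : forall s1 : seq ((I * I) * A),
    (forall p, List.In p s1 -> corner (E p.1.1) (E p.1.2) p.2) ->
    exists sp, forall a, inspan sp (\sum_(p <- s1) \sum_(q <- s) amul (amul p.2 a) q.2).
  exact: gen s Hs.
elim=> [|p s' IH] Hs'.
    by exists [::] => a; rewrite big_nil; apply: inspan0.
have [|sp2 Hsp2] := IH; first by move=> q' Hq'; apply: Hs'; right.
have [sp1 Hsp1] := inner _ _ _ (Hs' p (or_introl erefl)) s Hs.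
exists (sp1 ++ sp2) => a; rewrite big_cons; apply: inspanD.
  exact: inspan_catl.
exact: inspan_catr.
Qed.

End AUFc.


Section RadE.
Variable A : nualgType.
Hypothesis HA : AUF A.
Variable e : A.
Hypothesis Hpe : primitive e.

Let He : Defs.idempotent e. Proof. by case: Hpe. Qed.
Let e0 : e <> 0. Proof. by case: Hpe. Qed.
Let fe := fin_eAe HA e.

Lemma AeP (u : AeT e) : amul (val u) e = val u.
Proof. by case: u => x /=; rewrite unfold_in /= => /eqP. Qed.

Lemma inAe (x : A) : amul x e = x -> x \in Ae_pred e.
Proof. by move=> H; rewrite unfold_in /= H. Qed.

Lemma val_act (a : A) (u : AeT e) : val (act a u) = amul a (val u).
Proof. by []. Qed.
Lemma val_add (u v : AeT e) : val (u + v) = val u + val v.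
Proof. by []. Qed.
Lemma val_scale k (u : AeT e) : val (k *: u) = k *: val u.
Proof. by []. Qed.
Lemma val_zero : val (0 : AeT e) = 0.
Proof. by []. Qed.

Definition ee : AeT e := MkAe (inAe He).

Lemma act_ee (u : AeT e) : act (val u) ee = u.
Proof. by apply: val_inj; rewrite val_act /= AeP. Qed.

Definition Rp (x : A) := forall a, nilpt e (amul e (amul a x)).
Definition RR (u : AeT e) := Rp (val u).

Lemma Rp_in (x : A) a : amul x e = x -> inC e (amul e (amul a x)).
Proof. by move=> Hx; split; rewrite ?amulA ?He // -!amulA Hx. Qed.

Lemma NS x y : inC e x -> inC e y -> nilpt e x -> nilpt e y -> nilpt e (x + y).
Proof.
move=> Hx Hy Nx Ny; apply: NNPP => Nxy.
case: (dichot Hpe fe (inE_add Hx Hy)) => // [[g Hg]].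
pose v := amul e g.
have Hv : amul v (x + y) = e by rewrite /v -amulA Hg He.
have vin z : inC e z -> inC e (amul v z).
  by move=> [H1 H2]; split; rewrite ?amulA ?He // -amulA H2.
have vnil z : inC e z -> nilpt e z -> nilpt e (amul v z).
  move=> Hz Nz; case: (dichot Hpe fe (vin _ Hz)) => // [[w Hw]].
  by case: (linv_not_nilpt He e0 Hz (_ : amul (amul w v) z = e)) => //; rewrite -amulA.
have Hvx : amul v x = e - amul v y by rewrite -Hv amulDr addrK.
have [g' Hg'] := geom He (vin _ Hy) (vnil _ Hy Ny).
by apply: (linv_not_nilpt He e0 (vin _ Hx) (_ : amul g' (amul v x) = e)); [rewrite Hvx | apply: vnil].
Qed.

Lemma RR_sub : submodule RR.
Proof.
rewrite /RR /Rp; split.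
- by move=> a; change (nilpt e (amul e (amul a 0))); exists 1%N; rewrite /= !amul0r amul0l.
- move=> u v Hu Hv a; rewrite val_add amulDr amulDr.
  by apply: NS; rewrite ?Hu ?Hv //; apply: Rp_in; apply: AeP.
- move=> k u Hu a; rewrite val_scale amulZr amulZr.
  by apply: nilp_scale; [apply: Rp_in; apply: AeP | apply: Hu].
- move=> b u Hu a; rewrite val_act [amul a _]amulA; exact: Hu.
Qed.

Lemma ee_notR : ~ RR ee.
Proof. by move=> /(_ e) [n]; rewrite /= !He pw_e. Qed.

Lemma K_all (L : AeT e -> Prop) u : submodule L -> L u -> ~ RR u -> forall w, L w.
Proof.
move=> [_ _ _ Lact] Lu nR w.
have [a Na] : exists a, ~ nilpt e (amul e (amul a (val u))).
  by apply: NNPP => Hn; apply: nR => a; apply: NNPP => Hn'; apply: Hn; exists a.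
case: (dichot Hpe fe (Rp_in a (AeP u))) => // [[g Hg]].
have Lee : L ee.
  have -> : ee = act (amul (amul g e) a) u.
    by apply: val_inj; rewrite val_act /= -!amulA.
  exact: Lact.
by rewrite -(act_ee w); apply: Lact.
Qed.

Lemma proper_R (L : AeT e -> Prop) : submodule L -> Defs.proper L -> forall u, L u -> RR u.
Proof.
move=> HL [w Hw] u Lu; apply: NNPP => nR; apply: Hw; exact: K_all Lu nR w.
Qed.

Lemma mrad_R u : mrad (AeT e) u <-> RR u.
Proof.
split.
  move=> H; apply: H; split; first exact: RR_sub.
    by exists ee; apply: ee_notR.
  by move=> T HT PT _; apply: proper_R.
move=> Ru S [HS PS Smax].
exact: (Smax _ RR_sub (ex_intro _ ee ee_notR) (proper_R HS PS)).
Qed.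

End RadE.


Section HomL.
Variables (A : nualgType) (M N : numodType A) (f : M -> N).
Hypothesis Hf : is_hom f.

Lemma hom0 : f 0 = 0.
Proof.
have := (proj1 Hf) 1 0 0; rewrite scale1r addr0 scale1r => H.
by apply: (@addrI _ (f 0)); rewrite addr0 -H.
Qed.
Lemma homD x y : f (x + y) = f x + f y.
Proof. by have := (proj1 Hf) 1 x y; rewrite !scale1r. Qed.
Lemma homZ k x : f (k *: x) = k *: f x.
Proof. by have := (proj1 Hf) k x 0; rewrite !addr0 hom0 addr0. Qed.
Lemma homN x : f (- x) = - f x.
Proof. by rewrite -scaleN1r homZ scaleN1r. Qed.
Lemma homB x y : f (x - y) = f x - f y.
Proof. by rewrite homD homN. Qed.
Lemma homA a x : f (act a x) = act a (f x).
Proof. exact: (proj2 Hf). Qed.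
End HomL.

Section ActL.
Variables (A : nualgType) (M : numodType A).
Lemma act0l (m : M) : act (0 : A) m = 0.
Proof. by rewrite -(scale0r (0 : A)) actZl scale0r. Qed.
Lemma act0r (a : A) : act a (0 : M) = 0.
Proof. by have := actZr 0 a (0 : M); rewrite !scale0r. Qed.
Lemma actNl (a : A) (m : M) : act (- a) m = - act a m.
Proof. by rewrite -scaleN1r actZl scaleN1r. Qed.
Lemma actBl (a b : A) (m : M) : act (a - b) m = act a m - act b m.
Proof. by rewrite actDl actNl. Qed.
Lemma act_suml I (r : seq I) (F : I -> A) (m : M) :
  act (\sum_(i <- r) F i) m = \sum_(i <- r) act (F i) m.
Proof. by elim/big_rec2: _ => [|i y1 y2 _ <-]; rewrite ?act0l ?actDl. Qed.
End ActL.

Section Part1.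
Variable A : nualgType.
Hypothesis HA : AUF A.
Variable e : A.
Hypothesis Hpe : primitive e.

Lemma projective_Ae : projective (AeT e).
Proof.
move=> M N g h Hg Sg Hh.
have [m Hm] := Sg (h (ee Hpe)).
exists (fun x => act (val x) m); split; first split.
- by move=> k x y; rewrite val_add val_scale actDl actZl.
- by move=> a x; rewrite val_act actA.
- move=> x; rewrite homA // Hm -homA //; congr h; exact: act_ee.
Qed.

Lemma part1 (N : numodType A) (p : AeT e -> N) :
  quotient_map (mrad (AeT e)) p ->
  [/\ projective_cover p, irreducible N & coherent N].
Proof.
move=> [Hp Sp Kp].
have KR u : p u = 0 <-> RR u by rewrite Kp; apply: mrad_R.
have pee : p (ee Hpe) <> 0 by move/KR; apply: (@ee_notR _ _ Hpe).
split.
- split => //; first exact: projective_Ae.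
  move=> L HL Hsum.
  have [k [l [Hk [Hl Hkl]]]] := Hsum (ee Hpe).
  case: (classic (RR l)) => Rl; last exact: K_all HL Hl Rl.
  case: (@ee_notR _ _ Hpe); rewrite Hkl.
  case: (RR_sub HA Hpe) => _ RD _ _; apply: RD; [ apply/KR; exact: Hk | exact: Rl ].
- split; first by exists (p (ee Hpe)).
  move=> S [S0 SD SZ SA].
  have HS' : submodule (fun u => S (p u)).
    split; first by rewrite hom0.
    - by move=> x y Hx Hy; rewrite homD //; apply: SD.
    - by move=> k x Hx; rewrite homZ //; apply: SZ.
    - by move=> a x Hx; rewrite homA //; apply: SA.
  case: (classic (exists u, S (p u) /\ ~ RR u)) => [[u [Su nRu]]|Hn].
    right => n; have [u' <-] := Sp n; exact: K_all HS' Su nRu u'.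
  left => n Sn; have [u Hu] := Sp n; rewrite -Hu; apply/KR.
  by apply: NNPP => nR; apply: Hn; exists u; rewrite Hu.
- split.
    move=> n; have [u <-] := Sp n.
    have [a Ha] := local_unit HA (val u).
    exists a; rewrite -homA //; congr p; apply: val_inj; by rewrite val_act.
  exists [:: p (ee Hpe)] => n S [S0 SD SZ SA] Hin.
  have [u <-] := Sp n; rewrite -(act_ee Hpe u) homA //; apply: SA; apply: Hin; by left.
Qed.

End Part1.


Lemma sum_zero (V : zmodType) (T : Type) (f : T -> V) (s : seq T) :
  (forall p, List.In p s -> f p = 0) -> \sum_(p <- s) f p = 0.
Proof.
elim: s => [|p s IH] H; first by rewrite big_nil.
by rewrite big_cons H ?IH ?addr0 //; [move=> q Hq; apply: H; right | left].
Qed.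

Section Part2.
Variable A : nualgType.
Hypothesis HA : AUF A.
Variable M : numodType A.

Lemma idem_E : irreducible M -> quasicoherent M ->
  exists E : A, [/\ Defs.idempotent E, fin_dim (corner E E) & exists m : M, act E m <> 0].
Proof.
move=> [[m m0] _] Qc.
have [I [E [HE1 HE2 HE3 HE4]]] := HA.
have [a Ha] := Qc m.
have [s [Hs Has]] := HE4 a.
case: (classic (exists p, List.In p s /\ act p.2 m <> 0)) => [[p [Hp Hpm]]|Hn].
  exists (E p.1.2); split => //; exists m => HE; apply: Hpm.
  by rewrite -(corner_r (HE1 _) (Hs p Hp)) actA HE act0r.
exfalso; apply: m0; rewrite -Ha Has act_suml; apply: sum_zero => p Hp.
by apply: NNPP => H; apply: Hn; exists p.
Qed.

Lemma prim_exists : irreducible M -> quasicoherent M ->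
  exists e : A, primitive e /\ exists m : M, act e m <> 0.
Proof.
move=> Hirr Qc.
have [E [HE1 HE2 [m Hm]]] := idem_E Hirr Qc.
have [sp Hsp] := fin_dim_inspan HE2.
apply: NNPP => Hno.
pose P k := exists f (g : nat -> A), [/\ Defs.idempotent f, amul E f = f /\ amul f E = f,
  (exists m : M, act f m <> 0),
  (forall i, (i < k)%N -> [/\ Defs.idempotent (g i), g i <> 0, inC E (g i),
        amul (g i) f = 0 & amul f (g i) = 0]) &
  (forall i j, (i < k)%N -> (j < k)%N -> i <> j -> amul (g i) (g j) = 0)].
have step k f (g : nat -> A) x y :
  [/\ Defs.idempotent f, amul E f = f /\ amul f E = f,
   (forall i, (i < k)%N -> [/\ Defs.idempotent (g i), g i <> 0, inC E (g i),
        amul (g i) f = 0 & amul f (g i) = 0]) &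
   (forall i j, (i < k)%N -> (j < k)%N -> i <> j -> amul (g i) (g j) = 0)] ->
  Defs.idempotent x -> Defs.idempotent y -> amul x y = 0 -> amul y x = 0 ->
  amul f x = x -> amul x f = x -> amul f y = y -> amul y f = y -> y <> 0 ->
  (exists m : M, act x m <> 0) -> P k.+1.
  move=> [Hf [Ef fE] Hg Horth] Hx Hy xy yx fx xf fy yf y0 Hxm.
  have Ex : amul E x = x by rewrite -fx amulA Ef.
  have xE : amul x E = x by rewrite -xf -amulA fE.
  have Ey : amul E y = y by rewrite -fy amulA Ef.
  have yE : amul y E = y by rewrite -yf -amulA fE.
  exists x, (fun i => if i == k then y else g i); split => //.
    move=> i; rewrite ltnS leq_eqVlt; case: eqP => [_ _|Hik /= Hi].
      by split.
    have [Hg1 Hg2 Hg3 Hg5 Hg6] := Hg i Hi; split => //.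
      by rewrite -fx amulA Hg5 amul0l.
    by rewrite -xf -amulA Hg6 amul0r.
  move=> i j; rewrite !ltnS [(i <= k)%N]leq_eqVlt [(j <= k)%N]leq_eqVlt.
  case: eqP => [->|Hik] /=; case: eqP => [->|Hjk] //= Hi Hj Hij.
  - by have [_ _ _ _ H6] := Hg j Hj; rewrite -yf -amulA H6 amul0r.
  - by have [_ _ _ H5 _] := Hg i Hi; rewrite -fy amulA H5 amul0l.
  - exact: Horth.
have Pk k : P k.
  elim: k => [|k [f [g [Hf Hfe Hfm Hg Horth]]]].
    by exists E, (fun _ => 0); split => //; exists m.
  have [m' Hm'] := Hfm.
  have f0 : f <> 0 by move=> H; apply: Hm'; rewrite H act0l.
  have [h [Hh [fh hf] h0 hf']] : exists h, [/\ Defs.idempotent h, idem_le h f, h <> 0 & h <> f].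
    apply: NNPP => Hn; apply: Hno; exists f; split; last by exists m'.
    split => // h Hh Hle; case: (classic (h = 0)) => [|H0]; [by left|right].
    by apply: NNPP => Hf'; apply: Hn; exists h.
  have Hh' : Defs.idempotent (f - h).
    by rewrite /Defs.idempotent amulBl !amulBr Hf fh hf Hh subrr subr0.
  have hh' : amul h (f - h) = 0 by rewrite amulBr hf Hh subrr.
  have h'h : amul (f - h) h = 0 by rewrite amulBl fh Hh subrr.
  have fh' : amul f (f - h) = f - h by rewrite amulBr Hf fh.
  have h'f : amul (f - h) f = f - h by rewrite amulBl Hf hf.
  have h'0 : f - h <> 0 by move/eqP; rewrite subr_eq0 => /eqP H; apply: hf'.
  case: (classic (act h m' = 0)) => Hhm.
    apply: (step k f g (f - h) h) => //; exists m'.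
    by rewrite actBl Hhm subr0.
  by apply: (step k f g h (f - h)) => //; exists m'.
have [f [g [_ _ _ Hg Horth]]] := Pk (size sp).+1.
have [c [[j Hj] Hc]] := @lin_dep _ sp (size sp).+1 (fun i => g i) (ltnSn _)
  (fun i => Hsp _ (ex_intro _ (g i) (let: And5 _ _ (conj H3 H4) _ _ := Hg i (ltn_ord i) in
      esym (etrans (congr1 (amul ^~ E) H3) H4)))).
have := congr1 (amul (g j)) Hc.
rewrite amul_sumr amul0r (bigD1 j) //= big1 ?addr0.
  rewrite amulZr; have [-> _ _ _ _] := Hg j (ltn_ord j).
  by move/eqP; rewrite scaler_eq0 => /orP [/eqP|/eqP]; [apply: Hj | have [_ ? _ _ _] := Hg j (ltn_ord j)].
move=> i Hij; rewrite amulZr Horth ?scaler0 // => H.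
by move/eqP: Hij; apply; apply: val_inj.
Qed.

End Part2.


Section SubHom.
Variables (A : nualgType) (M N : numodType A) (g : M -> N).
Hypothesis Hg : is_hom g.

Lemma pre_sub (S : N -> Prop) : submodule S -> submodule (fun x => S (g x)).
Proof.
move=> [S0 SD SZ SA]; split; first by rewrite hom0.
- by move=> x y Hx Hy; rewrite homD //; apply: SD.
- by move=> k x Hx; rewrite homZ //; apply: SZ.
- by move=> a x Hx; rewrite homA //; apply: SA.
Qed.

Lemma img_sub (S : M -> Prop) : submodule S -> submodule (fun n => exists w, S w /\ g w = n).
Proof.
move=> [S0 SD SZ SA]; split; first by exists 0; rewrite hom0.
- by move=> _ _ [x [Hx <-]] [y [Hy <-]]; exists (x + y); rewrite homD //; split => //; apply: SD.
- by move=> k _ [x [Hx <-]]; exists (k *: x); rewrite homZ //; split => //; apply: SZ.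
- by move=> a _ [x [Hx <-]]; exists (act a x); rewrite homA //; split => //; apply: SA.
Qed.

Lemma ker_sub : submodule (fun x => g x = 0).
Proof.
have := @pre_sub (fun y => y = 0); apply; split => //.
- by move=> x y -> ->; rewrite addr0.
- by move=> k x ->; rewrite scaler0.
- by move=> a x ->; rewrite act0r.
Qed.

Lemma inv_hom (h : N -> M) : cancel g h -> cancel h g -> is_hom h.
Proof.
move=> c1 c2; split.
  by move=> k x y; rewrite -{1}(c2 x) -{1}(c2 y) -homZ // -homD // c1.
by move=> a x; rewrite -{1}(c2 x) -homA // c1.
Qed.
End SubHom.

Lemma comp_hom (A : nualgType) (M N P : numodType A) (g : M -> N) (h : N -> P) :
  is_hom g -> is_hom h -> is_hom (fun x => h (g x)).
Proof.
move=> Hg Hh; split.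
  by move=> k x y; rewrite (proj1 Hg) (proj1 Hh).
by move=> a x; rewrite !homA.
Qed.

Section Quot.
Variables (A : nualgType) (M : numodType A) (S : M -> Prop).
Hypothesis HS : submodule S.

Lemma S0 : S 0. Proof. by case: HS. Qed.
Lemma SD x y : S x -> S y -> S (x + y). Proof. by case: HS => _ H _ _; apply: H. Qed.
Lemma SZ k x : S x -> S (k *: x). Proof. by case: HS => _ _ H _; apply: H. Qed.
Lemma SN x : S x -> S (- x). Proof. by move=> Hx; rewrite -scaleN1r; apply: SZ. Qed.
Lemma SB x y : S x -> S y -> S (x - y). Proof. by move=> Hx Hy; apply: SD => //; apply: SN. Qed.
Lemma SA a x : S x -> S (act a x). Proof. by case: HS => _ _ _ H; apply: H. Qed.

Definition canon (x : M) : M := epsilon (inhabits (0 : M)) (fun y => S (x - y)).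

Lemma canonP x : S (x - canon x).
Proof. by apply: (epsilon_spec (inhabits (0 : M)) (fun y => S (x - y))); exists x; rewrite subrr; apply: S0. Qed.

Lemma canon_eq x y : S (x - y) -> canon x = canon y.
Proof.
move=> Hxy; rewrite /canon; congr epsilon.
apply: functional_extensionality => z; apply: propositional_extensionality; split => H.
  by have := SB H Hxy; rewrite opprB addrC addrA subrK.
by have := SD Hxy H; rewrite addrA subrK.
Qed.

Lemma canonK x : canon (canon x) = canon x.
Proof. by apply: canon_eq; rewrite -opprB; apply: SN; apply: canonP. Qed.

Definition Qpred : {pred M} := fun x => canon x == x.
Inductive QT : predArgType := MkQ (x : M) of x \in Qpred.
Definition Q_val (u : QT) := let: MkQ x _ := u in x.
HB.instance Definition _ := [isSub of QT for Q_val].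
HB.instance Definition _ := [Choice of QT by <:].

Lemma mkq_in x : canon x \in Qpred.
Proof. by rewrite unfold_in /= canonK. Qed.
Definition mkq x : QT := MkQ (mkq_in x).

Lemma valq (a : QT) : canon (val a) = val a.
Proof. by case: a => x /=; rewrite unfold_in /= => /eqP. Qed.
Lemma mkqK (a : QT) : mkq (val a) = a.
Proof. by apply: val_inj; rewrite /= valq. Qed.
Lemma mkq_eq x y : S (x - y) -> mkq x = mkq y.
Proof. by move=> H; apply: val_inj; rewrite /= (canon_eq H). Qed.
Lemma mkq_eqP x y : mkq x = mkq y -> S (x - y).
Proof.
move=> /(congr1 val) /= H.
have := SB (canonP x) (canonP y); rewrite H opprB addrA subrK //.
Qed.
Lemma canon_c x : S (canon x - x).
Proof. by rewrite -opprB; apply: SN; apply: canonP. Qed.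

Definition qadd (a b : QT) := mkq (val a + val b).
Definition qopp (a : QT) := mkq (- val a).
Definition qzero := mkq 0.
Definition qscale (k : CC) (a : QT) := mkq (k *: val a).
Definition qact (r : A) (a : QT) := mkq (act r (val a)).

Lemma qaddE x y : qadd (mkq x) (mkq y) = mkq (x + y).
Proof.
apply: mkq_eq => /=; rewrite opprD addrACA; apply: SD; exact: canon_c.
Qed.
Lemma qoppE x : qopp (mkq x) = mkq (- x).
Proof. by apply: mkq_eq => /=; rewrite opprK addrC; apply: canonP. Qed.
Lemma qscaleE k x : qscale k (mkq x) = mkq (k *: x).
Proof. by apply: mkq_eq => /=; rewrite -scalerBr; apply: SZ; apply: canon_c. Qed.
Lemma qactE r x : qact r (mkq x) = mkq (act r x).
Proof.
apply: mkq_eq => /=; rewrite -scaleN1r -actZr -actDr scaleN1r.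
by apply: SA; apply: canon_c.
Qed.

Lemma qaddA : associative qadd.
Proof. by move=> a b c; rewrite -[a]mkqK -[b]mkqK -[c]mkqK !qaddE addrA. Qed.
Lemma qaddC : commutative qadd.
Proof. by move=> a b; rewrite -[a]mkqK -[b]mkqK !qaddE addrC. Qed.
Lemma qadd0 : left_id qzero qadd.
Proof. by move=> a; rewrite -[a]mkqK /qzero qaddE add0r. Qed.
Lemma qaddN : left_inverse qzero qopp qadd.
Proof. by move=> a; rewrite -[a]mkqK qoppE qaddE addNr. Qed.

HB.instance Definition _ := GRing.isZmodule.Build QT qaddA qaddC qadd0 qaddN.

Lemma qscaleA a b v : qscale a (qscale b v) = qscale (a * b) v.
Proof. by rewrite -[v]mkqK !qscaleE scalerA. Qed.
Lemma qscale1 : left_id 1 qscale.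
Proof. by move=> v; rewrite -[v]mkqK qscaleE scale1r. Qed.
Lemma qscaleDr : right_distributive qscale qadd.
Proof. by move=> k a b; rewrite -[a]mkqK -[b]mkqK qaddE !qscaleE qaddE scalerDr. Qed.
Lemma qscaleDl v : {morph qscale^~ v : a b / a + b >-> qadd a b}.
Proof. by move=> a b; rewrite -[v]mkqK !qscaleE qaddE scalerDl. Qed.

HB.instance Definition _ := GRing.Zmodule_isLmodule.Build CC QT qscaleA qscale1 qscaleDr qscaleDl.

Lemma qaddE' x y : mkq x + mkq y = mkq (x + y). Proof. exact: qaddE. Qed.
Lemma qscaleE' k x : k *: mkq x = mkq (k *: x). Proof. exact: qscaleE. Qed.

Lemma qactA a b m : qact (amul a b) m = qact a (qact b m).
Proof. by rewrite -[m]mkqK !qactE actA. Qed.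
Lemma qactDl a b m : qact (a + b) m = qact a m + qact b m.
Proof. by rewrite -[m]mkqK !qactE actDl qaddE'. Qed.
Lemma qactDr a m n : qact a (m + n) = qact a m + qact a n.
Proof. by rewrite -[m]mkqK -[n]mkqK qaddE' !qactE actDr qaddE'. Qed.
Lemma qactZl k a m : qact (k *: a) m = k *: qact a m.
Proof. by rewrite -[m]mkqK !qactE actZl qscaleE'. Qed.
Lemma qactZr k a m : qact a (k *: m) = k *: qact a m.
Proof. by rewrite -[m]mkqK qscaleE' !qactE actZr qscaleE'. Qed.

HB.instance Definition _ := Lmodule_isNUModule.Build A QT qactA qactDl qactDr qactZl qactZr.

Definition QN : numodType A := QT.

Lemma mkq_hom : is_hom (mkq : M -> QN).
Proof.
split; last by move=> a x; rewrite -qactE.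
by move=> k x y; rewrite qscaleE' qaddE'.
Qed.

Lemma mkq_surj (y : QT) : exists x, mkq x = y.
Proof. by exists (val y); apply: mkqK. Qed.

Lemma mkq_ker x : mkq x = 0 <-> S x.
Proof.
split => [H|Hx].
  by have := mkq_eqP (H : mkq x = mkq 0); rewrite subr0.
by apply: (mkq_eq (y := 0)); rewrite subr0.
Qed.

End Quot.


Section Final.
Variable A : nualgType.
Hypothesis HA : AUF A.

Lemma ee_act (e : A) (Hpe : primitive e) : act e (ee Hpe) = ee Hpe.
Proof. exact: (act_ee Hpe (ee Hpe)). Qed.

Lemma part2_map (e : A) (Hpe : primitive e) (M : numodType A) (m : M) :
  irreducible M -> act e m <> 0 ->
  exists p : AeT e -> M, quotient_map (mrad (AeT e)) p.
Proof.
move=> [_ Hirr] Hm.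
have He : Defs.idempotent e by case: Hpe.
pose m0 := act e m.
have em0 : act e m0 = m0 by rewrite /m0 -actA He.
pose p (u : AeT e) := act (val u) m0.
have Hp : is_hom p.
  split; first by move=> k x y; rewrite /p val_add val_scale actDl actZl.
  by move=> a x; rewrite /p val_act actA.
have pee : p (ee Hpe) = m0 by [].
exists p; split => //.
  move=> n; case: (Hirr _ (img_sub Hp (S := fun _ => True) _)).
  - by split.
  - by move=> H; exfalso; apply: Hm; apply: H; exists (ee Hpe).
  by move=> H; have [w [_ <-]] := H n; exists w.
move=> u; rewrite mrad_R //; split => [Hu|Ru].
  apply: NNPP => nR; apply: Hm; rewrite -/m0 -pee.
  exact: (K_all HA Hpe (ker_sub Hp) Hu nR).
apply: NNPP => Hpu.
case: (Hirr _ (img_sub Hp (RR_sub HA Hpe))) => [H|H].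
  by apply: Hpu; apply: H; exists u.
have [w [Rw Hw]] := H m0.
have Hz := Rw e.
pose z := amul e (amul e (val w)).
have zm : act z m0 = m0 by rewrite /z !actA; move: Hw; rewrite /p => ->; rewrite !em0.
have pz j : act (pw e z j) m0 = m0.
  by elim: j => [|j IH] //=; rewrite actA IH.
case: Hz => j Hj; apply: Hm; rewrite -/m0 -(pz j).
by rewrite /z in Hj; rewrite Hj act0l.
Qed.

Lemma part2 (M : numodType A) : irreducible M -> quasicoherent M ->
  exists2 e : A, primitive e & exists p : AeT e -> M, quotient_map (mrad (AeT e)) p.
Proof.
move=> Hirr Qc.
have [e [Hpe [m Hm]]] := prim_exists HA Hirr Qc.
by exists e => //; apply: part2_map Hm.
Qed.

End Final.


Section Part3.
Variable A : nualgType.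
Hypothesis HA : AUF A.
Variables e f : A.
Hypothesis Hpe : primitive e.
Hypothesis Hpf : primitive f.

Let He : Defs.idempotent e. Proof. by case: Hpe. Qed.
Let Hf : Defs.idempotent f. Proof. by case: Hpf. Qed.
Let e0 : e <> 0. Proof. by case: Hpe. Qed.

Lemma a_c : isomorphic (AeT e) (AeT f) -> exists u, partial_isometry u e f.
Proof.
move=> [phi [Hphi [psi c1 c2]]].
have Hpsi := inv_hom Hphi c1 c2.
pose u := val (phi (ee Hpe)); pose v := val (psi (ee Hpf)).
have eu : amul e u = u.
  by rewrite /u -val_act -homA // ee_act.
have fv : amul f v = v.
  by rewrite /v -val_act -homA // ee_act.
have uf : amul u f = u by apply: AeP.
have ve : amul v e = v by apply: AeP.
have vu : amul v u = f.
  have : phi (psi (ee Hpf)) = ee Hpf by rewrite c2.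
  by rewrite -(act_ee Hpe (psi _)) homA // => /(congr1 val).
have uv : amul u v = e.
  have : psi (phi (ee Hpe)) = ee Hpe by rewrite c1.
  by rewrite -(act_ee Hpf (phi _)) homA // => /(congr1 val).
exists u; split; first by exists u; rewrite eu uf.
by exists v; split => //; exists v; rewrite fv ve.
Qed.

Lemma c_a : (exists u, partial_isometry u e f) -> isomorphic (AeT e) (AeT f).
Proof.
move=> [u [cu [v [cv [uv vu]]]]].
have uf : amul u f = u := corner_r Hf cu.
have ve : amul v e = v := corner_r He cv.
have Hphi (x : AeT e) : amul (amul (val x) u) f = amul (val x) u by rewrite -amulA uf.
have Hpsi (x : AeT f) : amul (amul (val x) v) e = amul (val x) v by rewrite -amulA ve.
pose phi (x : AeT e) : AeT f := MkAe (inAe (Hphi x)).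
pose psi (x : AeT f) : AeT e := MkAe (inAe (Hpsi x)).
exists phi; split.
  split.
    by move=> k x y; apply: val_inj; rewrite /= amulDl amulZl.
  by move=> a x; apply: val_inj; rewrite /= amulA.
exists psi.
  by move=> x; apply: val_inj; rewrite /= -amulA uv AeP.
by move=> x; apply: val_inj; rewrite /= -amulA vu AeP.
Qed.

Definition Bst := exists (N : numodType A) (p : AeT e -> N) (q : AeT f -> N),
  quotient_map (mrad (AeT e)) p /\ quotient_map (mrad (AeT f)) q.

Lemma a_b : isomorphic (AeT e) (AeT f) -> Bst.
Proof.
move=> [phi [Hphi [psi c1 c2]]].
have Hpsi := inv_hom Hphi c1 c2.
have HR := RR_sub HA Hpe.
exists (QN HR), (mkq HR), (fun y => mkq HR (psi y)); split.
  split; [exact: mkq_hom | exact: mkq_surj | ].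
  by move=> x; rewrite mkq_ker mrad_R.
split; first exact: comp_hom Hpsi (mkq_hom HR).
  by move=> y; have [x <-] := mkq_surj HR y; exists (phi x); rewrite c1.
move=> y; rewrite mkq_ker mrad_R //; split => Hy.
  apply: (proper_R HA Hpf (L := fun y => RR (psi y))) Hy.
    by apply: (pre_sub Hpsi); exact: HR.
  by exists (phi (ee Hpe)); rewrite c1; apply: ee_notR.
rewrite -[y]c2 in Hy.
apply: (proper_R HA Hpe (L := fun x => RR (phi x))) Hy.
  by apply: (pre_sub Hphi); exact: (RR_sub HA Hpf).
by exists (psi (ee Hpf)); rewrite c2; apply: ee_notR.
Qed.

Lemma b_c : Bst -> exists u, partial_isometry u e f.
Proof.
move=> [N [p [q [[Hp Sp Kp] [Hq Sq Kq]]]]].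
have [y Hy] := Sq (p (ee Hpe)).
have [x Hx] := Sp (q (ee Hpf)).
pose yu := act e y; pose u := val yu.
pose xv := act f x; pose v := val xv.
have eu : amul e u = u by rewrite /u /yu val_act amulA He.
have uf : amul u f = u by apply: AeP.
have fv : amul f v = v by rewrite /v /xv val_act amulA Hf.
have ve : amul v e = v by apply: AeP.
have qyu : q yu = p (ee Hpe) by rewrite /yu homA // Hy -homA // ee_act.
have pxv : p xv = q (ee Hpf) by rewrite /xv homA // Hx -homA // ee_act.
have Hyu : act u (ee Hpf) = yu by apply: val_inj; rewrite val_act uf.
have H1 : p (act u xv - ee Hpe) = 0.
  by rewrite homB // homA // pxv -homA // Hyu qyu subrr.
have : mrad (AeT e) (act u xv - ee Hpe) by apply/Kp.
rewrite mrad_R // => /(_ e).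
have -> : amul e (amul e (val (act u xv - ee Hpe))) = amul u v - e.
  change (val (act u xv - ee Hpe)) with (amul u v - e).
  have E1 : amul e (amul u v - e) = amul u v - e by rewrite amulBr amulA eu He.
  by rewrite !E1.
move=> Nuv; clearbody u v.
have Cuv : inC e (amul u v).
  by split; [rewrite amulA eu | rewrite -amulA ve].
have Cuve : inC e (amul u v - e) by apply: inE_add => //; apply: inE_opp; split.
case: (dichot Hpe (fin_eAe HA e) Cuv) => [Nuv'|[g Hg]].
  have : nilpt e (amul u v + (-1) *: (amul u v - e)).
    by apply: (NS HA Hpe) => //; [apply: inE_scale | apply: nilp_scale].
  rewrite scaleN1r opprB addrC subrK => [[n]]; rewrite pw_e //.
pose u2 := amul (amul e g) u.
have u2v : amul u2 v = e by rewrite /u2 -!amulA Hg He.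
have eu2 : amul e u2 = u2 by rewrite /u2 !amulA He.
have u2f : amul u2 f = u2 by rewrite /u2 -amulA uf.
pose f' := amul v u2.
have Hf' : Defs.idempotent f'.
  by rewrite /Defs.idempotent /f' -amulA [amul u2 (amul v u2)]amulA u2v eu2.
have ff' : amul f f' = f' by rewrite /f' amulA fv.
have f'f : amul f' f = f' by rewrite /f' -amulA u2f.
have [Hz|Hz] : f' = 0 \/ f' = f by case: Hpf => _ _ H; apply: H; [exact: Hf' | exact: (conj ff' f'f)].
  exfalso; apply: e0; rewrite -u2v.
  have -> : u2 = amul u2 f' by rewrite /f' amulA u2v eu2.
  by rewrite Hz amul0r amul0l.
exists u2; split; first by exists (amul g u); rewrite /u2 -!amulA uf.
exists v; split; first by exists v; rewrite fv ve.
by split.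
Qed.

Lemma part3 : (isomorphic (AeT e) (AeT f) <-> Bst) /\ (Bst <-> exists u, partial_isometry u e f).
Proof.
split; split.
- exact: a_b.
- by move=> H; apply: c_a; apply: b_c.
- exact: b_c.
- by move=> H; apply: a_b; apply: c_a.
Qed.

End Part3.


Theorem theorem5p5 (A : nualgType) :
  AUF A ->
  (* 1. Ae -> Ae/rad(Ae) is a projective cover of the irreducible coherent
        module Ae/rad(Ae) *)
  [/\ (forall (e : A), primitive e ->
         forall (N : numodType A) (p : AeT e -> N),
           quotient_map (mrad (AeT e)) p ->
           [/\ projective_cover p, irreducible N & coherent N]),
  (* 2. every irreducible quasicoherent module is some Ae/rad(Ae) *)
      (forall M : numodType A, irreducible M -> quasicoherent M ->
         exists2 e : A, primitive e &
           exists p : AeT e -> M, quotient_map (mrad (AeT e)) p) &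
  (* 3. (a) <-> (b) <-> (c) *)
      (forall e f : A, primitive e -> primitive f ->
         (isomorphic (AeT e) (AeT f) <->
            exists (N : numodType A) (p : AeT e -> N) (q : AeT f -> N),
              quotient_map (mrad (AeT e)) p /\ quotient_map (mrad (AeT f)) q) /\
         ((exists (N : numodType A) (p : AeT e -> N) (q : AeT f -> N),
              quotient_map (mrad (AeT e)) p /\ quotient_map (mrad (AeT f)) q) <->
            exists u : A, partial_isometry u e f))].
Proof.
move=> HA; split.
- by move=> e Hpe N p Hp; apply: (part1 HA Hpe Hp).
- by move=> M Hirr Qc; apply: (part2 HA Hirr Qc).
- by move=> e f Hpe Hpf; apply: (part3 HA Hpe Hpf).
Qed.
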